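(* Let $\alpha\in\mathbb{C}$, $\beta\in\mathbb{C}\setminus\mathbb{Z}$, and let $D\in\mathrm{Der}(\mathcal{W},\mathcal{F}_\alpha\otimes\mathcal{F}_\beta)_0$ satisfy $D(L_0)=0$, $D(L_1)=c\,v_{l+1}\otimes v_{-l}$ for some $l\in\mathbb{Z}$ and $c\in\mathbb{C}$, and $D(L_{-1})=0$. Then $D=0$.
   Context: The Witt algebra $\mathcal{W}$ has basis $\{L_n\mid n\in\mathbb{Z}\}$ and bracket $[L_m,L_n]=(m-n)L_{m+n}$. $\mathcal{F}_\alpha$ has basis $\{v_n\}$ with $L_m\cdot v_n=-(\alpha m+n)v_{m+n}$; $\mathcal{F}_\alpha\otimes\mathcal{F}_\beta$ is a $\mathcal{W}$-module via $L_m\cdot(v_i\otimes v_j)=-(i+\alpha m)v_{m+i}\otimes v_j-(j+\beta m)v_i\otimes v_{m+j}$, graded by $(\mathcal{F}_\alpha\otimes\mathcal{F}_\beta)_k=\bigoplus_i\mathbb{C}\,v_i\otimes v_{k-i}$. $\mathrm{Der}(\mathcal{W},\mathcal{F}_\alpha\otimes\mathcal{F}_\beta)_0$ is the space of linear maps $D$ with $D([x,y])=x\cdot D(y)-y\cdot D(x)$ and $D(L_m)\in(\mathcal{F}_\alpha\otimes\mathcal{F}_\beta)_m$ for all $m$. *)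

(* Defs.v *)
From HB Require Import structures.
From mathcomp Require Import all_boot all_order all_algebra.
From mathcomp Require Import complex.
From mathcomp Require Import reals.
Set Implicit Arguments. Unset Strict Implicit. Unset Printing Implicit Defensive.
Import Order.TTheory GRing.Theory Num.Theory.
Local Open Scope ring_scope.
Local Open Scope complex_scope.

(* An element of F_alpha (x) F_beta is written as its coefficient function
   t : int -> int -> C, where t i j is the coefficient of v_i (x) v_j;
   genuine elements are the finitely supported ones. *)
Definition tens (R : realType) := int -> int -> R[i].

Definition fin_supp (R : realType) (t : tens R) : Prop :=
  exists s : seq (int * int), forall i j, t i j != 0 -> (i, j) \in s.

Definition graded (R : realType) (k : int) (t : tens R) : Prop :=
  forall i j, t i j != 0 -> i + j = k.

(* The action L_m . t, coefficientwise:
   L_m (v_a (x) v_b) = -(a + alpha m) v_{m+a} (x) v_b - (b + beta m) v_a (x) v_{m+b}. *)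
Definition act (R : realType) (alpha beta : R[i]) (m : int) (t : tens R) : tens R :=
  fun i j =>
    - (((i - m)%:~R + alpha * m%:~R) * t (i - m) j)
    - ((j - m)%:~R + beta * m%:~R) * t i (j - m).

(* A linear map D : W -> F_alpha (x) F_beta is given by its values D m = D(L_m)
   on the basis {L_m}. *)
Definition is_der0 (R : realType) (alpha beta : R[i]) (D : int -> tens R) : Prop :=
  (forall m, fin_supp (D m) /\ graded m (D m)) /\
  (forall m n i j,
      (m - n)%:~R * D (m + n) i j = act alpha beta m (D n) i j - act alpha beta n (D m) i j).

Definition simple_tens (R : realType) (c : R[i]) (a b : int) : tens R :=
  fun i j => if (i == a) && (j == b) then c else 0.

(* Main.v *)
Require Import Defs.
From HB Require Import structures.
From mathcomp Require Import all_boot all_order all_algebra.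
From mathcomp Require Import complex.
From mathcomp Require Import reals.
From mathcomp Require Import zify ring.
Import Order.TTheory GRing.Theory Num.Theory.
Local Open Scope ring_scope.
Local Open Scope complex_scope.

Lemma bound_above (s : seq (int * int)) : exists N : int, forall p, p \in s -> p.1 <= N.
Proof.
elim: s => [|q s [N HN]]; first by exists 0.
exists (Num.max q.1 N) => p; rewrite inE => /orP [/eqP -> | /HN H].
  by rewrite le_max lexx.
by rewrite le_max H orbT.
Qed.

Lemma bound_below (s : seq (int * int)) : exists N : int, forall p, p \in s -> N <= p.1.
Proof.
elim: s => [|q s [N HN]]; first by exists 0.
exists (Num.min q.1 N) => p; rewrite inE => /orP [/eqP -> | /HN H].
  by rewrite ge_min lexx.
by rewrite ge_min H orbT.
Qed.

Lemma intrm1 (R : realType) : ((-1)%:~R : R[i]) = -1.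
Proof. by rewrite rmorphN1. Qed.

Lemma inj_m1 (R : realType) (alpha beta : R[i]) (hbeta : forall k : int, beta != k%:~R)
  (t : tens R) : fin_supp t -> (forall i j, act alpha beta (-1) t i j = 0) ->
  forall i j, t i j = 0.
Proof.
move=> [s Hs] H.
have [N HN] := bound_above s.
have big : forall i j, N < i -> t i j = 0.
  move=> i j Hi; apply/eqP; apply: contraT => /Hs /HN /= Hle.
  by move: (lt_le_trans Hi Hle); rewrite ltxx.
have step : forall i, (forall j, t (i + 1) j = 0) -> forall j, t i j = 0.
  move=> i Hi j; have := H i (j - 1); rewrite /act opprK subrK Hi mulr0 oppr0 sub0r.
  move/eqP; rewrite oppr_eq0 mulf_eq0 => /orP [|/eqP //].
  rewrite intrm1 mulrN1 subr_eq0 => /eqP E.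
  by move: (hbeta j); rewrite -E eqxx.
have down : forall k : nat, forall j, t (N - k%:Z) j = 0.
  elim=> [|k IH] j; first by apply: step => j'; apply: big; rewrite subr0 ltrDl.
  apply: step => j'; rewrite (_ : N - k.+1%:Z + 1 = N - k%:Z); first exact: IH.
  lia.
move=> i j; case: (ltP N i) => Hi; first exact: big.
have -> : i = N - (`|N - i|%N)%:Z by lia.
exact: down.
Qed.

Lemma inj_1 (R : realType) (alpha beta : R[i]) (hbeta : forall k : int, beta != k%:~R)
  (t : tens R) : fin_supp t -> (forall i j, act alpha beta 1 t i j = 0) ->
  forall i j, t i j = 0.
Proof.
move=> [s Hs] H.
have [N HN] := bound_below s.
have small : forall i j, i < N -> t i j = 0.
  move=> i j Hi; apply/eqP; apply: contraT => /Hs /HN /= Hle.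
  by move: (lt_le_trans Hi Hle); rewrite ltxx.
have step : forall i, (forall j, t (i - 1) j = 0) -> forall j, t i j = 0.
  move=> i Hi j; have := H i (j + 1); rewrite /act addrK Hi mulr0 oppr0 sub0r.
  move/eqP; rewrite oppr_eq0 mulf_eq0 => /orP [|/eqP //].
  rewrite mulr1 addr_eq0 => /eqP E.
  by move: (hbeta (- j)); rewrite mulrNz E opprK eqxx.
have up : forall k : nat, forall j, t (N + k%:Z) j = 0.
  elim=> [|k IH] j; first by apply: step => j'; apply: small; rewrite addr0 gtrDl.
  apply: step => j'; rewrite (_ : N + k.+1%:Z - 1 = N + k%:Z); first exact: IH.
  lia.
move=> i j; case: (ltP i N) => Hi; first exact: small.
have -> : i = N + (`|i - N|%N)%:Z by lia.
exact: up.
Qed.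

Theorem lemmaL1p10 (R : realType) (alpha beta : R[i])
  (hbeta : forall k : int, beta != k%:~R)
  (D : int -> tens R) (hD : is_der0 alpha beta D)
  (l : int) (c : R[i])
  (h0 : forall i j, D 0 i j = 0)
  (h1 : forall i j, D 1 i j = simple_tens c (l + 1) (- l) i j)
  (hm1 : forall i j, D (-1) i j = 0) :
  forall m i j, D m i j = 0.
Proof.
case: hD => [Hf Hr].
have actz : forall m (t : tens R), (forall i j, t i j = 0) ->
    forall i j, act alpha beta m t i j = 0.
  by move=> m t Ht i j; rewrite /act !Ht; ring.
have D1 : forall i j, D 1 i j = 0.
  apply: (@inj_m1 R alpha beta hbeta _ (Hf 1).1) => i j.
  have := Hr 1 (-1) i j; rewrite (actz _ _ hm1) (_ : 1 + -1 = 0) ?h0 ?mulr0; last by [].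
  by move=> E; apply/eqP; rewrite -oppr_eq0 -sub0r -E.
have Dpos : forall n : nat, forall i j, D (Posz n.+1) i j = 0.
  elim=> [|n IH]; [by [] | ].
  apply: (@inj_m1 R alpha beta hbeta _ (Hf _).1) => i j.
  have := Hr (-1) (Posz n.+2) i j.
  rewrite (_ : -1 + Posz n.+2 = Posz n.+1); last by rewrite addrC.
  rewrite IH (actz _ _ hm1) mulr0 => /esym; rewrite ?subr0 ?oppr0 ?addr0.
  done.
have Dneg : forall n : nat, forall i j, D (- Posz n.+1) i j = 0.
  elim=> [|n IH]; [by [] | ].
  apply: (@inj_1 R alpha beta hbeta _ (Hf _).1) => i j.
  have := Hr 1 (- Posz n.+2) i j.
  have e : 1 + - Posz n.+2 = - Posz n.+1 by lia.
  rewrite e.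
  rewrite IH (actz _ _ D1) mulr0 => /esym; rewrite ?subr0 ?oppr0 ?addr0.
  done.
case=> [[|n]|n] i j.
- exact: h0.
- exact: Dpos.
- rewrite NegzE; exact: Dneg.
Qed.
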